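(* Let $\mathcal{X}$ be a set, $\mathsf{B}_{\mathcal{X}}=\{-1,1\}^{\mathcal{X}}$, and let $\mathcal{U}_{\mathcal{X}}$ be the set of all unit covariances on $\mathcal{X}$, viewed as a (convex) subset of the real vector space $\mathscr{F}_{\mathcal{X}}$ of symmetric functions $\mathcal{X}\times\mathcal{X}\to\mathbb{R}$. Then the extreme points of $\mathcal{U}_{\mathcal{X}}$ are exactly the functions $u\otimes u$, $u\in\mathsf{B}_{\mathcal{X}}$, where $(u\otimes u)_{x,y}=u_xu_y$.
   Context: A unit field on $\mathcal{X}$ is a random element $X$ of $\mathsf{B}_{\mathcal{X}}=\{-1,1\}^{\mathcal{X}}$ (with the discrete structure). Its unit covariance is $\rho^X_{x,y}=\mathbf{E}[X_xX_y]=2\mathbb{P}(X_x=X_y)-1$, $x,y\in\mathcal{X}$. A symmetric function $\rho$ is a unit covariance if $\rho=\rho^X$ for some unit field $X$. An extreme point of a convex set $C$ is a point $x\in C$ such that whenever $x\in[y,z]$ with $y,z\in C$, then $x=y$ or $x=z$. *)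

(* Defs.v *)
From HB Require Import structures.
From mathcomp Require Import all_boot all_order all_algebra.
From mathcomp Require Import all_classical all_reals all_analysis.
Set Implicit Arguments. Unset Strict Implicit. Unset Printing Implicit Defensive.
Import Order.TTheory GRing.Theory Num.Theory.
Local Open Scope classical_set_scope.
Local Open Scope ring_scope.

Definition is_unit_vec (R : realType) (X : Type) (u : X -> R) : Prop :=
  forall x, u x = 1 \/ u x = -1.

Definition unit_field (R : realType) (X : Type) (d : measure_display)
  (T : measurableType d) (Fld : T -> X -> R) : Prop :=
  (forall w, is_unit_vec (Fld w)) /\
  (forall x, measurable_fun setT (fun w => Fld w x)).

Definition unit_cov (R : realType) (X : Type) (rho : X -> X -> R) : Prop :=
  exists (d : measure_display) (T : measurableType d) (P : probability T R)
         (Fld : T -> X -> R),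
    unit_field Fld /\
    forall x y, rho x y = 2 * fine (P [set w | Fld w x = Fld w y]) - 1.

Definition extreme_point (R : realType) (X : Type)
  (C : (X -> X -> R) -> Prop) (f : X -> X -> R) : Prop :=
  C f /\
  forall g h : X -> X -> R, C g -> C h ->
    (exists t : R, 0 <= t <= 1 /\
       forall x y, f x y = (1 - t) * g x y + t * h x y) ->
    f = g \/ f = h.

Definition tensor (R : realType) (X : Type) (u : X -> R) : X -> X -> R :=
  fun x y => u x * u y.

(* Main.v *)
Require Import Defs.
From HB Require Import structures.
From mathcomp Require Import all_boot all_order all_algebra.
From mathcomp Require Import all_classical all_reals all_analysis.
From mathcomp Require Import ring lra.
Import Order.TTheory GRing.Theory Num.Theory.
Set Implicit Arguments. Unset Strict Implicit.
Local Open Scope classical_set_scope.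
Local Open Scope ring_scope.


Section prelim.
Context (R : realType) (d : measure_display) (T : measurableType d)
  (P : probability T R).

Lemma fin_P {A : set T} : measurable A -> P A = (fine (P A))%:E.
Proof. by move=> mA; rewrite fineK // fin_num_measure. Qed.

Lemma pr_ge0 {A : set T} : measurable A -> 0 <= fine (P A).
Proof. by move=> mA; apply: fine_ge0; apply: measure_ge0. Qed.

Lemma pr_le1 {A : set T} : measurable A -> fine (P A) <= 1.
Proof. by move=> mA; have := probability_le1 P mA; rewrite fin_P // lee_fin. Qed.

Lemma prC {A : set T} : measurable A -> fine (P (~` A)) = 1 - fine (P A).
Proof.
by move=> mA; rewrite probability_setC // fineB // fin_num_measure.
Qed.

Lemma prU {A B : set T} : measurable A -> measurable B -> A `&` B = set0 ->
  fine (P (A `|` B)) = fine (P A) + fine (P B).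
Proof.
move=> mA mB AB; rewrite (@measureU _ _ _ P A B mA mB AB).
by rewrite fineD // fin_num_measure.
Qed.

Lemma pr_le {A B : set T} : measurable A -> measurable B -> A `<=` B ->
  fine (P A) <= fine (P B).
Proof.
move=> mA mB AB; apply: fine_le; rewrite ?fin_num_measure //.
by apply: le_measure; rewrite ?inE.
Qed.

Lemma pr_split {A S : set T} : measurable A -> measurable S ->
  fine (P A) = fine (P (A `&` S)) + fine (P (A `&` ~` S)).
Proof.
move=> mA mS; rewrite -prU; first by rewrite -setIUr setUv setIT.
- exact: measurableI.
- by apply: measurableI => //; apply: measurableC.
- by rewrite setIACA setICr setI0.
Qed.

Lemma pr_I1 {A B : set T} : measurable A -> measurable B ->
  fine (P A) = 1 -> fine (P B) = 1 -> fine (P (A `&` B)) = 1.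
Proof.
move=> mA mB hA hB.
have := pr_split mA mB.
have := pr_le (measurableI _ _ mA (measurableC mB)) (measurableC mB) (@subIsetr _ _ _).
rewrite prC // hB subrr.
have := pr_ge0 (measurableI _ _ mA (measurableC mB)).
have := pr_le1 (measurableI _ _ mA mB).
lra.
Qed.

Lemma pr_ne0 {A : set T} : fine (P A) = 1 -> exists w, A w.
Proof.
move=> h; apply: contrapT => nA.
have A0 : A = set0 by apply/seteqP; split => w // Aw; apply: nA; exists w.
by move: h; rewrite A0 measure0 /= => /eqP; rewrite eq_sym oner_eq0.
Qed.

End prelim.


Section cond.
Context (R : realType) (d : measure_display) (T : measurableType d)
  (P : probability T R).

Lemma cond_val (S : set T) (mS : measurable S) (A : set T) :
  measurable A -> 0 < fine (P S) ->
  fine (mnormalize (mrestr P mS) P A) = fine (P (A `&` S)) / fine (P S).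
Proof.
move=> mA p0.
have e : mrestr P mS setT = (fine (P S))%:E.
  by rewrite /mrestr setTI -(fin_P P mS).
rewrite /mnormalize /= e.
have -> : ((fine (P S))%:E == 0)%E = false by rewrite eqe gt_eqF.
rewrite /= /mrestr.
by rewrite (fin_P P (measurableI _ _ mA mS)) -EFinM.
Qed.

Lemma cond_split (S : set T) (mS : measurable S) :
  0 < fine (P S) < 1 ->
  exists Q1 Q2 : probability T R,
    (forall A, measurable A ->
       fine (P A) = fine (P S) * fine (Q1 A) + (1 - fine (P S)) * fine (Q2 A))
    /\ fine (Q1 S) = 1 /\ fine (Q2 S) = 0.
Proof.
move=> /andP[p0 p1].
have mSc := measurableC mS.
have q0 : 0 < fine (P (~` S)) by rewrite prC //; lra.
exists (mnormalize (mrestr P mS) P), (mnormalize (mrestr P mSc) P).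
split; last split.
- move=> A mA; rewrite (cond_val _ mA p0) (cond_val _ mA q0) prC //.
  rewrite (pr_split P mA mS); field.
  by apply/andP; split; apply/eqP; lra.
- by rewrite cond_val // setIid divff //; apply/eqP; lra.
- by rewrite cond_val // setICr measure0 /= mul0r.
Qed.

End cond.


Lemma conv_pm1 (R : realType) (t a b c : R) : 0 < t < 1 -> -1 <= a <= 1 ->
  -1 <= b <= 1 -> (c = 1 \/ c = -1) -> c = (1 - t) * a + t * b -> c = a.
Proof.
move=> /andP[t0 t1] /andP[a0 a1] /andP[b0 b1] [] -> e.
- have h1 : 0 <= (1 - t) * (1 - a) by apply: mulr_ge0; lra.
  have h2 : 0 <= t * (1 - b) by apply: mulr_ge0; lra.
  have h3 : (1 - t) * (1 - a) = 0 by lra.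
  move/eqP: h3; rewrite mulf_eq0 => /orP[/eqP|/eqP]; lra.
- have h1 : 0 <= (1 - t) * (1 + a) by apply: mulr_ge0; lra.
  have h2 : 0 <= t * (1 + b) by apply: mulr_ge0; lra.
  have h3 : (1 - t) * (1 + a) = 0 by lra.
  move/eqP: h3; rewrite mulf_eq0 => /orP[/eqP|/eqP]; lra.
Qed.

Lemma meas_eq (R : realType) (X : Type) (d : measure_display) (T : measurableType d)
  (Fld : T -> X -> R) : unit_field Fld ->
  forall x y, measurable [set w | Fld w x = Fld w y].
Proof.
move=> [_ hm] x y.
have -> : [set w | Fld w x = Fld w y] =
   (fun w => Fld w x - Fld w y) @^-1` [set 0].
  apply/seteqP; split => w /=; first by move=> ->; rewrite subrr.
  by move/eqP; rewrite subr_eq0 => /eqP.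
rewrite -(setTI (_ @^-1` _)).
apply: (measurable_realfun.measurable_funB (hm x) (hm y)) => //.
Qed.

Lemma unit_cov_bound (R : realType) (X : Type) (rho : X -> X -> R) :
  unit_cov rho -> forall x y, -1 <= rho x y <= 1.
Proof.
move=> [d [T [P [Fld [hF hr]]]]] x y; rewrite hr.
have m := meas_eq hF x y.
have := pr_ge0 P m; have := pr_le1 P m.
move=> h1 h2; apply/andP; split; lra.
Qed.

Lemma tensor_cov (R : realType) (X : Type) (u : X -> R) :
  is_unit_vec u -> unit_cov (tensor u).
Proof.
move=> hu.
exists default_measure_display, R, (@dirac _ R 0 R), (fun _ => u).
split; first by split => // x; exact: measurable_cst.
move=> x y; rewrite /tensor.
have [e|ne] := pselect (u x = u y).
- have -> : [set _ : R | u x = u y] = setT by apply/seteqP; split.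
  rewrite probability_setT /= e.
  by case: (hu y) => ->; lra.
- have -> : [set _ : R | u x = u y] = set0 by apply/seteqP; split.
  rewrite measure0 /=.
  by move: ne; case: (hu x) => ->; case: (hu y) => -> //; lra.
Qed.


Lemma extreme_01 (R : realType) (X : Type) (rho : X -> X -> R)
  (d : measure_display) (T : measurableType d) (P : probability T R)
  (Fld : T -> X -> R) :
  unit_field Fld ->
  (forall x y, rho x y = 2 * fine (P [set w | Fld w x = Fld w y]) - 1) ->
  extreme_point (@unit_cov R X) rho ->
  forall x y, fine (P [set w | Fld w x = Fld w y]) = 0 \/
              fine (P [set w | Fld w x = Fld w y]) = 1.
Proof.
move=> hF hr [_ hext] x y.
set E := [set w | Fld w x = Fld w y].
have mE : measurable E := meas_eq hF x y.
have := pr_ge0 P mE; have := pr_le1 P mE.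
rewrite le_eqVlt => /orP[/eqP -> |p1]; first by right.
rewrite le_eqVlt => /orP[/eqP <- |p0]; first by left.
exfalso.
have [Q1 [Q2 [hs [h1 h2]]]] := cond_split mE (introT andP (conj p0 p1)).
pose g := fun a b => 2 * fine (Q1 [set w | Fld w a = Fld w b]) - 1.
pose h := fun a b => 2 * fine (Q2 [set w | Fld w a = Fld w b]) - 1.
have hg : unit_cov g by exists d, T, Q1, Fld.
have hh : unit_cov h by exists d, T, Q2, Fld.
have : rho = g \/ rho = h.
  apply: hext => //; exists (1 - fine (P E)); split.
    by apply/andP; split; lra.
  move=> a b; rewrite hr /g /h (hs _ (meas_eq hF a b)); ring.
move=> [] /(congr1 (fun f => f x y)); rewrite hr /g /h -/E ?h1 ?h2; lra.
Qed.

Unset Implicit Arguments.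

Theorem proposition1 (R : realType) (X : Type) (rho : X -> X -> R) :
  extreme_point (@unit_cov R X) rho <->
  exists u : X -> R, is_unit_vec u /\ rho = tensor u.
Proof.
split.
- move=> hext; have hext' := hext.
  case: hext => [[d [T [P [Fld [hF hr]]]]] _].
  have h01 := extreme_01 hF hr hext'.
  have pm : forall a b, rho a b = 1 \/ rho a b = -1.
    move=> a b; rewrite hr; case: (h01 a b) => ->; [right|left]; lra.
  have [[x0 _]|nX] := pselect (exists x : X, True); last first.
    exists (fun _ => 1); split; first by move=> ?; left.
    by apply/funext => x; exfalso; apply: nX; exists x.
  exists (fun x => rho x0 x); split; first by move=> x; exact: pm.
  pose G a b := [set w | Fld w a * Fld w b = rho a b].
  have hG : forall a b, measurable (G a b) /\ fine (P (G a b)) = 1.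
    move=> a b; have mE := meas_eq hF a b.
    case: (h01 a b) => e.
    + have -> : G a b = ~` [set w | Fld w a = Fld w b].
        apply/seteqP; split => w /=; rewrite /G /= hr e;
        case: (hF.1 w a) => ->; case: (hF.1 w b) => -> //; lra.
      by split; [exact: measurableC | rewrite prC // e subr0].
    + have -> : G a b = [set w | Fld w a = Fld w b].
        apply/seteqP; split => w /=; rewrite /G /= hr e;
        case: (hF.1 w a) => ->; case: (hF.1 w b) => -> //; lra.
      by split.
  apply/funext => x; apply/funext => y; rewrite /tensor.
  have [m1 p1] := hG x0 x; have [m2 p2] := hG x0 y; have [m3 p3] := hG x y.
  have := pr_I1 (measurableI _ _ m1 m2) m3 (pr_I1 m1 m2 p1 p2) p3.
  move=> /pr_ne0 [w [[e1 e2] e3]].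
  rewrite -e1 -e2 -e3.
  by case: (hF.1 w x0) => ->; case: (hF.1 w x) => ->; case: (hF.1 w y) => ->; ring.
- move=> [u [hu ->]]; split; first exact: tensor_cov.
  move=> g h hg hh [t [/andP[t0 t1] hf]].
  have bg := unit_cov_bound hg; have bh := unit_cov_bound hh.
  have pmu : forall x y, tensor u x y = 1 \/ tensor u x y = -1.
    by move=> x y; rewrite /tensor; case: (hu x) => ->; case: (hu y) => ->;
      [left|right|right|left]; ring.
  case: (eqVneq t 0) => [t0'|tn0].
    left; apply/funext => x; apply/funext => y; rewrite hf t0'; ring.
  case: (eqVneq t 1) => [t1'|tn1].
    right; apply/funext => x; apply/funext => y; rewrite hf t1'; ring.
  left; apply/funext => x; apply/funext => y.
  apply: (@conv_pm1 R t _ (h x y)) => //.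
  by apply/andP; split; rewrite lt_neqAle ?tn1 ?t1 // eq_sym tn0.
Qed.
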